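(* For $0\le d\le r<\min\{m,n\}$ there is a surjection of $\mathfrak{S}_n\times\mathfrak{S}_m$-modules $R(\mathcal{Z}_{n,m,r})_d\twoheadrightarrow R(\mathcal{Z}_{n,m,r+1})_d$.
   Context: Fix positive integers $n,m$. $\mathbb{C}[\mathbf{x}_{n\times m}]$ is the polynomial ring in variables $x_{i,j}$; $\mathfrak{S}_n\times\mathfrak{S}_m$ acts by $(g,h)\cdot x_{i,j}=x_{g(i),h(j)}$. For finite stable $\mathcal{Z}\subseteq\mathrm{Mat}_{n\times m}(\mathbb{C})$, $R(\mathcal{Z})=\mathbb{C}[\mathbf{x}_{n\times m}]/\mathrm{gr}\,\mathbf{I}(\mathcal{Z})$, where $\mathbf{I}(\mathcal{Z})$ is the vanishing ideal and $\mathrm{gr}\,\mathbf{I}(\mathcal{Z})$ the ideal generated by top-degree homogeneous components of its nonzero elements; $R(\mathcal{Z})_d$ is its degree-$d$ component. $\mathcal{Z}_{n,m,r}$ is the set of $n\times m$ $0/1$ matrices with exactly $r$ ones and at most one $1$ in each row and column. *)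

(* Defs.v *)
From HB Require Import structures.
From mathcomp Require Import all_boot all_order all_algebra all_fingroup.
From mathcomp Require Import mpoly.
Set Implicit Arguments. Unset Strict Implicit. Unset Printing Implicit Defensive.
Import GRing.Theory Num.Theory.
Local Open Scope ring_scope.

(* The polynomial ring C[x_{n x m}] is {mpoly C[n * m]}; the variable x_{i,j}
   is 'X_(mxvec_index i j), i.e. variables are indexed by the entries of an
   n x m matrix through MathComp's row-major vectorization. *)
Notation PR C n m := {mpoly C[n * m]}.

Definition xvar (C : nzRingType) (n m : nat) (i : 'I_n) (j : 'I_m) : PR C n m :=
  'X_(mxvec_index i j).

Definition evalM (C : comNzRingType) (n m : nat) (A : 'M[C]_(n, m)) (f : PR C n m) : C :=
  f.@[fun k => mxvec A 0 k].

(* action of (g,h) in S_n x S_m: the ring endomorphism x_{i,j} |-> x_{g i, h j} *)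
Definition xact (C : comNzRingType) (n m : nat) (g : 'S_n) (h : 'S_m) (f : PR C n m)
  : PR C n m :=
  mmap (@mpolyC _ C)
    (fun k => mxvec (\matrix_(i < n, j < m) xvar C (g i) (h j)) 0 k) f.

Definition Zset (C : nzRingType) (n m r : nat) (A : 'M[C]_(n, m)) : Prop :=
  [/\ forall i j, A i j = 0 \/ A i j = 1,
      #|[set ij : 'I_n * 'I_m | A ij.1 ij.2 == 1]| = r,
      forall i, (#|[set j | A i j == 1%R]| <= 1)%N &
      forall j, (#|[set i | A i j == 1%R]| <= 1)%N].

Definition vanish (C : comNzRingType) (n m : nat) (Z : 'M[C]_(n, m) -> Prop)
  (f : PR C n m) : Prop :=
  forall A, Z A -> evalM A f = 0.

(* top-degree homogeneous component of f (f <> 0 has total degree (msize f).-1) *)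
Definition topc (C : nzRingType) (N : nat) (f : {mpoly C[N]}) : {mpoly C[N]} :=
  pihomog mdeg (msize f).-1 f.

Definition in_ideal (C : comNzRingType) (N : nat) (S : {mpoly C[N]} -> Prop)
  (p : {mpoly C[N]}) : Prop :=
  exists (k : nat) (a s : 'I_k -> {mpoly C[N]}),
    (forall i, S (s i)) /\ p = \sum_(i < k) a i * s i.

Definition grI (C : comNzRingType) (n m : nat) (Z : 'M[C]_(n, m) -> Prop)
  (p : PR C n m) : Prop :=
  in_ideal (fun t => exists f, [/\ f != 0, vanish Z f & t = topc f]) p.

(* Main.v *)
Require Import Defs.
From HB Require Import structures.
From mathcomp Require Import all_boot all_order all_algebra all_fingroup.
From mathcomp Require Import mpoly.
From mathcomp Require Import ring lra zify.
Import GRing.Theory Num.Theory.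
Local Open Scope ring_scope.
Set Implicit Arguments. Unset Strict Implicit. Unset Printing Implicit Defensive.

Lemma QQS_id (R : comNzRingType) (x y z c : R) :
  x * ((x - 1) * z) - x * (x * y) + (x * y + x * y * c) =
  (x - 1) * (x * z - x * y + y * c) + y * c.
Proof. ring. Qed.

Lemma mono_id (R : comNzRingType) (x p y z c : R) :
  x * (p * z - p * y) + p * y * c = p * (x * z - x * y + y * c).
Proof. ring. Qed.

Section Gen.
Variables (R : idomainType) (N : nat).
Implicit Types (p q f : {mpoly R[N]}).

Lemma msizeMle p q : (msize (p * q) <= (msize p + msize q).-1)%N.
Proof.
have [->|np] := eqVneq p 0; first by rewrite mul0r msize0.
have [->|nq] := eqVneq q 0; first by rewrite mulr0 msize0.
by rewrite msizeM.
Qed.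

Lemma pihomog_small d p : (msize p <= d)%N -> pihomog mdeg d p = 0.
Proof.
move=> H; rewrite pihomogE big_seq_cond; apply: big_pred0 => mm.
apply/negbTE/negP => /andP[Hm /eqP E].
have := msize_mdeg_lt Hm; rewrite E; lia.
Qed.

Definition shT (k : 'I_N) : N.-tuple {mpoly R[N]} :=
  [tuple ('X_l - ((l == k)%:R)%:MP) | l < N].
Definition sh (k : 'I_N) f := f \mPo shT k.
Definition TT f := \sum_(k < N) 'X_k * (sh k f - f).

Lemma TT_add f g : TT (f + g) = TT f + TT g.
Proof.
rewrite /TT -big_split; apply: eq_bigr => k _ /=.
by rewrite /sh comp_mpolyD; ring.
Qed.

Lemma TT_scale c f : TT (c *: f) = c *: TT f.
Proof.
rewrite /TT scaler_sumr; apply: eq_bigr => k _ /=.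
by rewrite /sh comp_mpolyZ -scalerBr scalerAr.
Qed.

Lemma TT0 : TT 0 = 0.
Proof. by rewrite /TT big1 // => k _; rewrite /sh comp_mpoly0 subrr mulr0. Qed.

Definition QQ (k : 'I_N) (a : nat) : {mpoly R[N]} :=
  'X_k * ('X_k - 1) ^+ a - 'X_k ^+ a.+1 + 'X_k ^+ a *+ a.

Lemma QQS k a : QQ k a.+1 = ('X_k - 1) * QQ k a + 'X_k ^+ a *+ a.
Proof.
rewrite /QQ.
have e1 : 'X_k ^+ a.+1 = 'X_k * 'X_k ^+ a :> {mpoly R[N]} := exprS _ _.
have e2 : 'X_k ^+ a.+2 = 'X_k * ('X_k * 'X_k ^+ a) :> {mpoly R[N]}.
  by rewrite exprS e1.
have e3 : ('X_k - 1) ^+ a.+1 = ('X_k - 1) * ('X_k - 1) ^+ a :> {mpoly R[N]} := exprS _ _.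
rewrite e3 e2 e1 mulrS.
move: ('X_k ^+ a) (('X_k - 1) ^+ a) => y z.
rewrite -(mulr_natr y a) -(mulr_natr ('X_k * y) a); exact: QQS_id.
Qed.

Lemma msizeXm1 k : (msize ('X_k - 1 : {mpoly R[N]}) <= 2)%N.
Proof.
rewrite (leq_trans (msizeD_le _ _)) // geq_max msizeN msizeX mdeg1 /=.
by rewrite -(mpolyC1 N R) msizeC; case: (_ != _).
Qed.

Lemma msizeQQ k a : (msize (QQ k a) <= a)%N.
Proof.
elim: a => [|a IH].
  by rewrite /QQ !expr0 mulr1 expr1 mulr0n subrr addr0 msize0.
rewrite QQS (leq_trans (msizeD_le _ _)) // geq_max; apply/andP; split.
  apply: (leq_trans (msizeMle _ _)).
  have := msizeXm1 k; lia.
rewrite -scaler_nat (leq_trans (msizeZ_le _ _)) // mpolyXn msizeX mdegMn mdeg1.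
lia.
Qed.

Lemma sh_Xm k (m' : 'X_{1..N}) : m' k = 0%N -> sh k 'X_[m'] = 'X_[m'].
Proof.
move=> h0; rewrite /sh comp_mpolyX -{1}(comp_mpoly_id 'X_[m']) comp_mpolyX.
apply: eq_bigr => i _; rewrite !tnth_mktuple.
case: (eqVneq i k) => [->|ne]; first by rewrite h0 !expr0.
by rewrite /= mpolyC0 subr0.
Qed.

Lemma sh_Xk k a : sh k ('X_k ^+ a) = ('X_k - 1) ^+ a.
Proof.
rewrite /sh rmorphXn /= comp_mpolyXU -tnth_nth tnth_mktuple eqxx /= mpolyC1.
done.
Qed.

Lemma shM k p q : sh k (p * q) = sh k p * sh k q.
Proof. by rewrite /sh rmorphM. Qed.

Lemma TTmono_k (mm : 'X_{1..N}) k :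
  (msize ('X_k * (sh k 'X_[mm] - 'X_[mm]) + 'X_[mm] *+ (mm k)) <= mdeg mm)%N.
Proof.
set a := mm k; set m' := (mm - U_(k) *+ a)%MM.
have Em : mm = (m' + U_(k) *+ a)%MM.
  apply/mnmP => l; rewrite mnmDE mnmBE mulmnE mnm1E.
  by case: (eqVneq k l) => [<-|]; rewrite /a /=; lia.
have h0 : m' k = 0%N by rewrite mnmBE mulmnE mnm1E eqxx /a; lia.
have EX : 'X_[mm] = 'X_[m'] * 'X_k ^+ a :> {mpoly R[N]}.
  by rewrite {1}Em mpolyXD mpolyXn.
rewrite EX shM sh_Xm // sh_Xk -(mulr_natr _ a) mono_id.
rewrite (mulr_natr ('X_k ^+ a) a) -exprS -/(QQ k a).
apply: (leq_trans (msizeMle _ _)).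
rewrite msizeX.
have := msizeQQ k a.
have -> : mdeg mm = (mdeg m' + a)%N by rewrite {1}Em mdegD mdegMn mdeg1 mul1n.
lia.
Qed.

Lemma TTmono (mm : 'X_{1..N}) :
  (msize (TT 'X_[mm] + 'X_[mm] *+ mdeg mm) <= mdeg mm)%N.
Proof.
rewrite /TT mdegE -sumrMnr -big_split /=.
apply: (leq_trans (msize_sum _ _ _)).
apply/bigmax_leqP_seq => k _ _; rewrite -mdegE; exact: TTmono_k.
Qed.

Definition Df f := \sum_(mm <- msupp f) (f@_mm *: 'X_[mm]) *+ mdeg mm.

Lemma TT_sum (I : Type) (s : seq I) (F : I -> {mpoly R[N]}) :
  TT (\sum_(i <- s) F i) = \sum_(i <- s) TT (F i).
Proof. exact: (big_morph TT TT_add TT0). Qed.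

Lemma TTf_bound f : (msize (TT f + Df f) <= (msize f).-1)%N.
Proof.
rewrite {1}[f]mpolyE TT_sum /Df -big_split /=.
apply: (leq_trans (msize_sum _ _ _)).
apply/bigmax_leqP_seq => mm Hm _; rewrite TT_scale scalerMnr -scalerDr.
apply: (leq_trans (msizeZ_le _ _)).
apply: (leq_trans (TTmono mm)).
have := msize_mdeg_lt Hm; lia.
Qed.

Lemma msize_Df f : (msize (Df f) <= msize f)%N.
Proof.
apply: (leq_trans (msize_sum _ _ _)).
apply/bigmax_leqP_seq => mm Hm _; rewrite scalerMnr.
apply: (leq_trans (msizeZ_le _ _)).
rewrite -scaler_nat (leq_trans (msizeZ_le _ _)) // msizeX.
exact: msize_mdeg_lt Hm.
Qed.

Lemma pihomog_Df e f : pihomog mdeg e (Df f) = pihomog mdeg e f *+ e.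
Proof.
rewrite /Df raddf_sum pihomogE -sumrMnl [RHS]big_mkcond /=.
apply: eq_bigr => mm _.
rewrite raddfMn /= linearZ /= pihomogX.
by case: eqP => [->|_]; rewrite ?scaler0 ?mul0rn.
Qed.

Lemma msize_TT f : (msize (TT f) <= msize f)%N.
Proof.
have -> : TT f = (TT f + Df f) - Df f by rewrite addrK.
apply: (leq_trans (msizeD_le _ _)); rewrite geq_max msizeN msize_Df andbT.
have := TTf_bound f; lia.
Qed.

Lemma pihomog_TT f :
  pihomog mdeg (msize f).-1 (TT f) = - (pihomog mdeg (msize f).-1 f *+ (msize f).-1).
Proof.
have -> : TT f = (TT f + Df f) - Df f by rewrite addrK.
by rewrite raddfB /= pihomog_small ?TTf_bound // pihomog_Df sub0r.
Qed.

Lemma top_h f rho : ((msize f).-1 <= rho)%N ->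
  pihomog mdeg (msize f).-1 f *+ (rho - (msize f).-1)%N != 0 ->
  f *+ rho + TT f != 0 /\
  topc (f *+ rho + TT f) = pihomog mdeg (msize f).-1 f *+ (rho - (msize f).-1)%N.
Proof.
move=> le nz; set e := (msize f).-1 in le nz *.
have Ph : pihomog mdeg e (f *+ rho + TT f) = pihomog mdeg e f *+ (rho - e)%N.
  rewrite raddfD raddfMn /= pihomog_TT mulrnBr //.
have fnz : f != 0.
  by apply: contraNneq nz => ->; rewrite raddf0 mul0rn.
have szh : (msize (f *+ rho + TT f) <= msize f)%N.
  apply: (leq_trans (msizeD_le _ _)); rewrite geq_max msize_TT andbT.
  rewrite -scaler_nat; exact: msizeZ_le.
have gt : (e < msize (f *+ rho + TT f))%N.
  move: nz; rewrite -Ph pihomogE.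
  case: (boolP (has (fun mm => mdeg mm == e) (msupp (f *+ rho + TT f)))).
    case/hasP => mm Hm /eqP <- _; exact: msize_mdeg_lt.
  move=> /hasPn Hn; rewrite big_seq_cond big_pred0 ?eqxx //.
  by move=> mm; apply/negbTE/negP => /andP[/Hn /negP].
have hnz : f *+ rho + TT f != 0.
  by apply: contraTneq gt => ->; rewrite msize0.
split => //; rewrite /topc.
have -> : (msize (f *+ rho + TT f)).-1 = e.
  have := msize_poly_eq0 f; rewrite (negbTE fnz) /e; lia.
exact: Ph.
Qed.
End Gen.

Section Ideal.
Variables (R : comNzRingType) (N : nat) (S : {mpoly R[N]} -> Prop).

Lemma in_ideal0 : in_ideal S 0.
Proof.
exists 0%N, (fun _ => 0), (fun _ => 0); split; first by case.
by rewrite big_ord0.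
Qed.

Lemma in_idealS t : S t -> in_ideal S t.
Proof.
move=> St; exists 1%N, (fun _ => 1), (fun _ => t); split => //.
by rewrite big_ord1 mul1r.
Qed.

Lemma in_idealD p q : in_ideal S p -> in_ideal S q -> in_ideal S (p + q).
Proof.
move=> [k1 [a1 [s1 [H1 ->]]]] [k2 [a2 [s2 [H2 ->]]]].
exists (k1 + k2)%N, (fun i => match split i with inl j => a1 j | inr j => a2 j end),
  (fun i => match split i with inl j => s1 j | inr j => s2 j end); split.
  by move=> i; case: (split i).
rewrite big_split_ord /=; congr (_ + _); apply: eq_bigr => i _.
  by rewrite -[lshift _ _]/(unsplit (inl i)) unsplitK.
by rewrite -[rshift _ _]/(unsplit (inr i)) unsplitK.
Qed.

Lemma in_idealM c p : in_ideal S p -> in_ideal S (c * p).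
Proof.
move=> [k [a [s [H ->]]]]; exists k, (fun i => c * a i), s; split => //.
by rewrite mulr_sumr; apply: eq_bigr => i _; rewrite mulrA.
Qed.

Lemma in_ideal_sum (I : Type) (r : seq I) (P : pred I) (F : I -> {mpoly R[N]}) :
  (forall i, P i -> in_ideal S (F i)) -> in_ideal S (\sum_(i <- r | P i) F i).
Proof.
move=> H; apply: (big_ind (in_ideal S)) => //.
  exact: in_ideal0.
exact: in_idealD.
Qed.
End Ideal.

Lemma homog_ideal (R : comNzRingType) (N : nat) (S T : {mpoly R[N]} -> Prop) d p :
  (forall t, S t -> exists e, t \is e.-homog /\ ((e <= d)%N -> in_ideal T t)) ->
  p \is d.-homog -> in_ideal S p -> in_ideal T p.
Proof.
move=> HS Hp [k [a [s [Hs Ep]]]].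
rewrite -(pihomog_dE Hp) Ep raddf_sum /=; apply: in_ideal_sum => i _.
have [e [He Hl]] := HS _ (Hs i).
rewrite [a i](@pihomog_partitionE _ _ mdeg (msize (a i)) _ (leqnn _)) mulr_suml raddf_sum /=.
apply: in_ideal_sum => t _.
have Hm := dhomogM (pihomogP mdeg t (a i)) He.
case: (eqVneq (t + e)%N d) => [Ed|Nd].
  rewrite pihomog_dE -?Ed //; apply: in_idealM; apply: Hl; lia.
by rewrite (pihomog_ne0 Nd Hm); exact: in_ideal0.
Qed.

Section Mat.
Variables (C : numClosedFieldType) (n m : nat).

Lemma Zset_shift r (B : 'M[C]_(n, m)) i j :
  Zset r.+1 B -> B i j = 1 -> Zset r (B - delta_mx i j).
Proof.
case=> H01 Hc Hr Hcl Bij.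
have E : forall a b, (B - delta_mx i j) a b = if (a == i) && (b == j) then 0 else B a b.
  move=> a b; rewrite !mxE; case: (a =P i) => [->|] /=; case: (b =P j) => [->|] /=;
  by rewrite ?Bij ?subrr ?subr0.
have sub : forall a b, (B - delta_mx i j) a b == 1 -> B a b == 1.
  by move=> a b; rewrite E; case: ifP => // _; rewrite eq_sym oner_eq0.
split.
- move=> a b; rewrite E; case: ifP => _; [by left | exact: H01].
- have -> : [set ij : 'I_n * 'I_m | (B - delta_mx i j) ij.1 ij.2 == 1] =
            [set ij : 'I_n * 'I_m | B ij.1 ij.2 == 1] :\ (i, j).
    apply/setP => -[a b]; rewrite !inE E /= xpair_eqE.
    by case: ((a == i) && (b == j)); rewrite //= eq_sym oner_eq0.
  have := cardsD1 (i, j) [set ij : 'I_n * 'I_m | B ij.1 ij.2 == 1].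
  rewrite Hc inE /= Bij eqxx add1n => -[]; done.
- move=> a; apply: leq_trans (Hr a); apply: subset_leq_card.
  by apply/subsetP => b; rewrite !inE; apply: sub.
- move=> b; apply: leq_trans (Hcl b); apply: subset_leq_card.
  by apply/subsetP => a; rewrite !inE; apply: sub.
Qed.

Lemma sum_ones rho (B : 'M[C]_(n, m)) :
  Zset rho B -> \sum_(k < n * m) mxvec B 0 k = rho%:R.
Proof.
case=> H01 Hc _ _.
rewrite (reindex _ (curry_mxvec_bij n m)) /=.
rewrite (eq_bigr (fun ij => B ij.1 ij.2)); last by move=> [i j] _; rewrite /= mxvecE.
rewrite (bigID (fun ij => B ij.1 ij.2 == 1)) /=.
rewrite [X in _ + X]big1 ?addr0; last first.
  by move=> ij /negbTE; case: (H01 ij.1 ij.2) => ->; rewrite ?eqxx.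
rewrite (eq_bigr (fun _ => 1)); last by move=> ij /eqP.
rewrite sumr_const -Hc cardsE; done.
Qed.

Lemma vanish_h r (f : {mpoly C[n * m]}) :
  vanish (@Zset C n m r) f -> vanish (@Zset C n m r.+1) (f *+ r.+1 + TT f).
Proof.
move=> Hf B HB; rewrite /evalM.
set v := (fun k => mxvec B 0 k).
rewrite mevalD mevalMn /TT raddf_sum /=.
have Fk : forall k : 'I_(n * m),
    ('X_k * (sh k f - f)).@[v] = - (v k * f.@[v]).
  move=> k; rewrite mevalM mevalB mevalXU /sh comp_mpoly_meval.
  case: (mxvec_indexP k) => i j.
  rewrite /v mxvecE.
  case: (HB) => H01 _ _ _; case: (H01 i j) => Bij; rewrite Bij.
    by rewrite !mul0r oppr0.
  have Z := Hf _ (Zset_shift HB Bij).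
  rewrite /evalM in Z.
  rewrite (@meval_eq _ _ _ (fun k0 => mxvec (B - delta_mx i j) 0 k0)) ?Z ?sub0r ?mulrN //.
  move=> l; rewrite tnth_mktuple mevalB mevalXU mevalC linearB /= mxvec_delta !mxE.
  by rewrite eqxx /= eq_sym.
rewrite (eq_bigr _ (fun k _ => Fk k)) sumrN -mulr_suml (sum_ones HB).
by rewrite mulr_natl subrr.
Qed.

Lemma gen_in r d (t : {mpoly C[n * m]}) :
  (d <= r)%N ->
  (exists f, [/\ f != 0, vanish (@Zset C n m r) f & t = topc f]) ->
  exists e, t \is e.-homog /\ ((e <= d)%N ->
     in_ideal (fun t => exists f, [/\ f != 0, vanish (@Zset C n m r.+1) f & t = topc f]) t).
Proof.
move=> ledr [f [fnz Hf ->]]; exists (msize f).-1; split; first exact: pihomogP.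
move=> led; rewrite /topc.
set F := pihomog mdeg (msize f).-1 f.
have [->|Fnz] := eqVneq F 0; first exact: in_ideal0.
have kpos : ((r.+1 - (msize f).-1)%N%:R : C) != 0.
  rewrite pnatr_eq0; lia.
have nz : F *+ (r.+1 - (msize f).-1)%N != 0.
  by rewrite -scaler_nat scaler_eq0 negb_or kpos.
have [hnz htop] := top_h (leqW (leq_trans led ledr)) nz.
have -> : F = ((r.+1 - (msize f).-1)%N%:R^-1)%:MP * topc (f *+ r.+1 + TT f).
  by rewrite htop mul_mpolyC -scaler_nat scalerA mulVf // scale1r.
apply: in_idealM; apply: in_idealS.
exists (f *+ r.+1 + TT f); split => //; exact: vanish_h.
Qed.
End Mat.

Theorem mainTheorem10 (C : numClosedFieldType) (n m r d : nat) :
  (d <= r)%N -> (r < minn m n)%N ->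
  exists phi : {linear PR C n m -> PR C n m},
    [/\ (* phi maps R_d-representatives to R_d-representatives *)
        forall p : PR C n m, p \is d.-homog -> phi p \is d.-homog,
        (* well defined on the quotient: (gr I(Z_r))_d is sent into gr I(Z_{r+1}) *)
        forall p : PR C n m, p \is d.-homog ->
          grI (@Zset C n m r) p -> grI (@Zset C n m r.+1) (phi p),
        (* S_n x S_m-equivariant modulo gr I(Z_{r+1}) *)
        forall (g : 'S_n) (h : 'S_m) (p : PR C n m), p \is d.-homog ->
          grI (@Zset C n m r.+1) (phi (xact g h p) - xact g h (phi p)) &
        (* surjective onto R(Z_{r+1})_d *)
        forall q : PR C n m, q \is d.-homog ->
          exists2 p : PR C n m, p \is d.-homog &
            grI (@Zset C n m r.+1) (q - phi p)].
Proof.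
move=> ledr _; exists idfun; split.
- by move=> p.
- move=> p Hp Hg; apply: (homog_ideal _ Hp Hg) => t Ht; exact: gen_in ledr Ht.
- by move=> g h p _; rewrite /= subrr; exact: in_ideal0.
- by move=> q Hq; exists q => //; rewrite /= subrr; exact: in_ideal0.
Qed.
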